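(* Let $G=(V,E)$ be a simple connected graph with $N\ge 2$ nodes, and let $\tilde{L}_\tau$ denote either its Mellin transformed $d$-path Laplacian $\tilde{L}_{\mathrm{Mell}}=\sum_{d=1}^{d_{max}} d^{-s}L_d$ (with parameter $s>0$) or its Laplace transformed $d$-path Laplacian $\tilde{L}_{\mathrm{Lapl}}=L+\sum_{d=2}^{d_{max}} e^{-\lambda d}L_d$ (with parameter $\lambda>0$). Then $\lambda_2(\tilde{L}_\tau)/N\to\lambda_2(L)/N$ as $s\to\infty$ (respectively $\lambda\to\infty$), and $\lambda_2(\tilde{L}_\tau)/N\to 1$ as $s\to 0$ (respectively $\lambda\to 0$).
   Context: For a simple connected graph $G=(V,E)$ with $N$ nodes, $d_{ij}$ denotes the shortest-path distance between nodes $i$ and $j$ and $d_{max}$ the diameter. $L$ is the usual graph Laplacian ($L_{ii}=k_i$ the degree, $L_{ij}=-1$ if $(i,j)\in E$, $0$ otherwise). For $1\le d\le d_{max}$, the $d$-path Laplacian $L_d$ is the $N\times N$ matrix with $(L_d)_{ij}=-1$ if $i\neq j$ and $d_{ij}=d$, $(L_d)_{ij}=0$ if $i\ne j$ and $d_{ij}\neq d$, and $(L_d)_{ii}$ equal to the number of nodes $j$ with $d_{ij}=d$; thus $L_1=L$. For such Laplacian-type matrices $M$, $0=\lambda_1(M)\le\lambda_2(M)\le\cdots\le\lambda_N(M)$ denote the eigenvalues in increasing order. *)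

(* Defs.v *)
From Stdlib Require Import ClassicalEpsilon.
From HB Require Import structures.
From mathcomp Require Import all_boot all_order all_algebra.
From mathcomp Require Import all_classical all_reals all_analysis.
Set Implicit Arguments. Unset Strict Implicit. Unset Printing Implicit Defensive.
Import Order.TTheory GRing.Theory Num.Theory.
Local Open Scope ring_scope.

Section Graph.
Variable N : nat.
Implicit Types (e : rel 'I_N) (i j : 'I_N).

Definition simple_graph e := symmetric e /\ irreflexive e.
Definition connected_graph e := forall i j, connect e i j.

Fixpoint ball e (k : nat) i : {set 'I_N} :=
  match k with
  | 0 => [set i]
  | k'.+1 => ball e k' i :|: [set y | [exists z in ball e k' i, e z y]]
  end.

(* shortest-path distance: least k with j in ball e k i (for a connected
   graph on N nodes this is always < N) *)
Definition gdist e i j : nat := find (fun k => j \in ball e k i) (iota 0 N).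

Definition dmax e : nat := \max_(i < N) \max_(j < N) gdist e i j.

Definition dLap (R : ringType) e (d : nat) : 'M[R]_N :=
  \matrix_(i, j) (if i == j then #|[set k | gdist e i k == d]|%:R
                  else if gdist e i j == d then -1 else 0).

Definition Lap (R : ringType) e : 'M[R]_N := dLap R e 1.

Definition LMell (R : realType) e (s : R) : 'M[R]_N :=
  \sum_(1 <= d < (dmax e).+1) ((d%:R : R) `^ (- s)) *: dLap R e d.

Definition LLapl (R : realType) e (lam : R) : 'M[R]_N :=
  Lap R e + \sum_(2 <= d < (dmax e).+1) expR (- lam * d%:R) *: dLap R e d.

(* eigenvalues (with multiplicity) in increasing order: the sorted sequence
   of the roots of the characteristic polynomial, when it splits over R
   (always the case for the real symmetric matrices considered here) *)
Definition eigs (R : realType) (M : 'M[R]_N) : seq R :=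
  epsilon (inhabits [::])
    (fun s : seq R => sorted <=%R s /\ char_poly M = \prod_(x <- s) ('X - x%:P)).

Definition eigval (R : realType) (M : 'M[R]_N) (k : nat) : R :=
  nth 0 (eigs M) k.-1.

End Graph.

(* Main.v *)
Require Import Defs.
From HB Require Import structures.
From mathcomp Require Import all_boot all_order all_algebra.
From mathcomp Require Import all_classical all_reals all_analysis.
From mathcomp Require Import ring lra complex.
From Stdlib Require Import ClassicalEpsilon.
Import Order.TTheory GRing.Theory Num.Theory.
Import numFieldNormedType.Exports.
Local Open Scope ring_scope.
Local Open Scope classical_set_scope.

Section Split.
Local Open Scope complex_scope.
Lemma char_poly_conj (F : fieldType) n (P D : 'M[F]_n) : P \in unitmx ->
  char_poly (invmx P *m D *m P) = char_poly D.
Proof.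
move=> Pu.
rewrite /char_poly /char_poly_mx.
set Q' := map_mx polyC (invmx P); set P' := map_mx polyC P.
have QP : Q' *m P' = 1%:M by rewrite -map_mxM mulVmx // map_mx1.
have -> : 'X%:M - map_mx polyC (invmx P *m D *m P) =
   Q' *m ('X%:M - map_mx polyC D) *m P'.
  rewrite !map_mxM mulmxBr mulmxBl -/Q' -/P' mul_mx_scalar -scalemxAl QP.
  by rewrite scalemx1.
rewrite !det_mulmx mulrC mulrA -det_mulmx.
have -> : P' *m Q' = 1%:M by rewrite -map_mxM mulmxV // map_mx1.
by rewrite det1 mul1r.
Qed.


Lemma sym_split (R : realType) n (A : 'M[R]_n) : A^T = A ->
  exists s : seq R, sorted <=%R s /\ char_poly A = \prod_(x <- s) ('X - x%:P).
Proof.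
move=> Asym.
pose B := map_mx (real_complex R) A.
have Bh : B \is hermsymmx.
  apply: realsym_hermsym.
    by apply/is_hermitianmxP; rewrite expr0 scale1r map_mx_id // /B map_trmx Asym.
  by apply/mxOverP => i j; rewrite mxE; apply/complex_realP; exists (A i j).
have /orthomx_spectralP BE := hermitian_normalmx Bh.
have dreal := hermitian_spectral_diag_real Bh.
move: BE dreal; set P := spectralmx B; set d := spectral_diag B => BE dreal.
have cB : char_poly B = \prod_(i < n) ('X - (d 0 i)%:P).
  rewrite BE char_poly_conj ?spectral_unit // char_poly_trig ?diag_mx_is_trig //.
  by apply: eq_bigr => i _; rewrite mxE eqxx mulr1n.
pose r i := complex.Re (d 0 i).
have dE i : d 0 i = (r i)%:C.
  rewrite /r; have /complex_realP [k ->] : d 0 i \is Num.real by move/mxOverP: dreal; apply.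
  by [].
pose s := sort <=%R [seq r i | i <- enum 'I_n].
exists s; split; first by apply: sort_sorted; exact: le_total.
apply: (@map_poly_inj _ _ (real_complex R)).
rewrite map_char_poly -/B cB rmorph_prod.
rewrite (perm_big _ (permEl (perm_sort _ _))) big_map big_enum /=.
by apply: eq_bigr => i _; rewrite map_polyXsubC dE.
Qed.
End Split.
Section Cvg.
Context {T : Type} {F : set_system T} {FF : Filter F} {R : realType}.

Lemma cvg_bigsum (I : Type) (r : seq I) (f : I -> T -> R) (l : I -> R) :
  (forall i, f i @ F --> l i) ->
  (fun t => \sum_(i <- r) f i t) @ F --> \sum_(i <- r) l i.
Proof.
move=> H; elim: r => [|a r IH].
  have -> : (fun t => \sum_(i <- [::]) f i t) = (fun=> 0).
    by apply/funext => t; rewrite big_nil.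
  by rewrite big_nil; exact: cvg_cst.
have -> : (fun t => \sum_(i <- a :: r) f i t) =
    (fun t => f a t + \sum_(i <- r) f i t).
  by apply/funext => t; rewrite big_cons.
by rewrite big_cons; apply: cvgD.
Qed.

Definition pcvg (p : T -> {poly R}) (p0 : {poly R}) :=
  forall k, (fun t => (p t)`_k) @ F --> p0`_k.

Lemma pcvg_cst p0 : pcvg (fun=> p0) p0.
Proof. by move=> k; exact: cvg_cst. Qed.

Lemma pcvgD p q p0 q0 : pcvg p p0 -> pcvg q q0 ->
  pcvg (fun t => p t + q t) (p0 + q0).
Proof.
move=> Hp Hq k.
have -> : (fun t => (p t + q t)`_k) = (fun t => (p t)`_k + (q t)`_k).
  by apply/funext => t; rewrite coefD.
by rewrite coefD; apply: cvgD.
Qed.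

Lemma pcvgN p p0 : pcvg p p0 -> pcvg (fun t => - p t) (- p0).
Proof.
move=> Hp k.
have -> : (fun t => (- p t)`_k) = (fun t => - (p t)`_k).
  by apply/funext => t; rewrite coefN.
by rewrite coefN; apply: cvgN.
Qed.

Lemma pcvgM p q p0 q0 : pcvg p p0 -> pcvg q q0 ->
  pcvg (fun t => p t * q t) (p0 * q0).
Proof.
move=> Hp Hq k.
have -> : (fun t => (p t * q t)`_k) =
    (fun t => \sum_(j < k.+1) (p t)`_j * (q t)`_(k - j)).
  by apply/funext => t; rewrite coefM.
rewrite coefM; apply: cvg_bigsum => j; exact: cvgM.
Qed.

Lemma pcvgC (c : T -> R) (c0 : R) : c @ F --> c0 -> pcvg (fun t => (c t)%:P) c0%:P.
Proof.
move=> Hc [|k].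
  have -> : (fun t => (c t)%:P`_0) = c by apply/funext => t; rewrite coefC.
  by rewrite coefC.
have -> : (fun t => (c t)%:P`_k.+1) = (fun=> 0) by apply/funext => t; rewrite coefC.
by rewrite coefC; exact: cvg_cst.
Qed.

Lemma pcvg_sum (I : Type) (r : seq I) (f : I -> T -> {poly R}) l :
  (forall i, pcvg (f i) (l i)) ->
  pcvg (fun t => \sum_(i <- r) f i t) (\sum_(i <- r) l i).
Proof.
move=> H; elim: r => [|a r IH].
  have -> : (fun t => \sum_(i <- [::]) f i t) = (fun=> 0).
    by apply/funext => t; rewrite big_nil.
  by rewrite big_nil; exact: pcvg_cst.
have -> : (fun t => \sum_(i <- a :: r) f i t) =
    (fun t => f a t + \sum_(i <- r) f i t).
  by apply/funext => t; rewrite big_cons.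
by rewrite big_cons; apply: pcvgD.
Qed.

Lemma pcvg_prod (I : Type) (r : seq I) (f : I -> T -> {poly R}) l :
  (forall i, pcvg (f i) (l i)) ->
  pcvg (fun t => \prod_(i <- r) f i t) (\prod_(i <- r) l i).
Proof.
move=> H; elim: r => [|a r IH].
  have -> : (fun t => \prod_(i <- [::]) f i t) = (fun=> 1).
    by apply/funext => t; rewrite big_nil.
  by rewrite big_nil; exact: pcvg_cst.
have -> : (fun t => \prod_(i <- a :: r) f i t) =
    (fun t => f a t * \prod_(i <- r) f i t).
  by apply/funext => t; rewrite big_cons.
by rewrite big_cons; apply: pcvgM.
Qed.

Lemma pcvg_det n (A : T -> 'M[{poly R}]_n) (A0 : 'M[{poly R}]_n) :
  (forall i j, pcvg (fun t => A t i j) (A0 i j)) ->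
  pcvg (fun t => \det (A t)) (\det A0).
Proof.
move=> H.
rewrite /determinant; apply: pcvg_sum => s.
apply: pcvgM; first exact: pcvg_cst.
by apply: pcvg_prod => i; apply: H.
Qed.

Lemma pcvg_char_poly n (M : T -> 'M[R]_n) (M0 : 'M[R]_n) :
  (forall i j, (fun t => M t i j) @ F --> M0 i j) ->
  pcvg (fun t => char_poly (M t)) (char_poly M0).
Proof.
move=> H; rewrite /char_poly; apply: pcvg_det => i j.
rewrite /char_poly_mx.
have -> : (fun t => ('X%:M - map_mx polyC (M t)) i j) =
   (fun t => 'X *+ (i == j) + - (M t i j)%:P).
  by apply/funext => t; rewrite !mxE.
rewrite !mxE; apply: pcvgD; first exact: pcvg_cst.
by apply: pcvgN; apply: pcvgC.
Qed.

End Cvg.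
Section Roots.
Context {R : realType}.

Lemma head_min (s : seq R) x : sorted <=%R s -> x \in s -> head 0 s <= x.
Proof.
case: s => [|a s] //= Hs; rewrite inE => /orP [/eqP->|xin] //.
have /allP := order_path_min (@le_trans _ R) Hs.
by apply.
Qed.

Lemma head_in (s : seq R) : (0 < size s)%N -> head 0 s \in s.
Proof. by case: s => //= a s _; rewrite mem_head. Qed.

Lemma prod_lb (s : seq R) x eps : 0 <= eps ->
  (forall y, y \in s -> eps <= `|x - y|) ->
  eps ^+ size s <= `|\prod_(y <- s) (x - y)|.
Proof.
move=> e0; elim: s => [|a s IH] H; first by rewrite big_nil normr1 expr0.
rewrite big_cons normrM /= exprS; apply: ler_pM => //.
  by rewrite exprn_ge0.
  by apply: H; rewrite mem_head.
by apply: IH => y ys; apply: H; rewrite inE ys orbT.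
Qed.

Lemma horner_prodX (s : seq R) x :
  (\prod_(y <- s) ('X - y%:P)).[x] = \prod_(y <- s) (x - y).
Proof. by rewrite horner_prod; apply: eq_bigr => y _; rewrite hornerXsubC. Qed.

Lemma horner_diff_bound (p q : {poly R}) m (x B : R) :
  (size p <= m)%N -> (size q <= m)%N -> `|x| <= B ->
  `|p.[x] - q.[x]| <= \sum_(k < m) `|p`_k - q`_k| * B ^+ k.
Proof.
move=> sp sq xB.
rewrite (horner_coef_wide x sp) (horner_coef_wide x sq) -sumrB.
apply: le_trans (ler_norm_sum _ _ _) _.
apply: ler_sum => k _; rewrite -mulrBl normrM normrX.
apply: ler_wpM2l; first exact: normr_ge0.
by apply: lerXn2r; rewrite ?nnegrE ?normr_ge0 //; apply: le_trans xB.
Qed.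

Lemma root_head_cvg {T : Type} {F : set_system T} {PF : ProperFilter F}
  (r : T -> seq R) (r0 : seq R) :
  (0 < size r0)%N -> (forall t, size (r t) = size r0) ->
  (forall t, sorted <=%R (r t)) -> (forall t, all (fun x => 0 <= x) (r t)) ->
  sorted <=%R r0 ->
  pcvg (F:=F) (fun t => \prod_(x <- r t) ('X - x%:P)) (\prod_(x <- r0) ('X - x%:P)) ->
  (fun t => head 0 (r t)) @ F --> head 0 r0.
Proof.
move=> n0 sz srt nn srt0 Hc.
set mu := head 0 r0; set n := size r0.
set q := fun t => \prod_(x <- r t) ('X - x%:P).
set q0 := \prod_(x <- r0) ('X - x%:P).
set B := 1 + `|mu|.
set D := fun t => \sum_(k < n.+1) `|(q t)`_k - q0`_k| * B ^+ k.
have D0 : D @ F --> 0.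
  have -> : 0 = \sum_(k < n.+1) `|q0`_k - q0`_k| * B ^+ k.
    by rewrite big1 // => k _; rewrite subrr normr0 mul0r.
  apply: cvg_bigsum => k; apply: cvgM; last exact: cvg_cst.
  apply: cvg_norm; apply: cvgB; [exact: Hc | exact: cvg_cst].
have szq t : (size (q t) <= n.+1)%N by rewrite size_prod_XsubC sz.
have szq0 : (size q0 <= n.+1)%N by rewrite size_prod_XsubC.
apply/cvgrPdist_lt => eps eps0.
move/cvgrPdist_lt: D0 => /(_ (eps ^+ n) (exprn_gt0 _ eps0)).
apply: filterS => t Ht.
have Dlt : D t < eps ^+ n.
  by apply: le_lt_trans Ht; rewrite sub0r normrN ler_norm.
have bnd x : `|x| <= B -> `|(q t).[x] - q0.[x]| <= D t.
  by move=> xB; apply: horner_diff_bound.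
set h := head 0 (r t).
have hin : h \in r t by apply: head_in; rewrite sz.
have h0 : 0 <= h by move/allP: (nn t) => /(_ h hin).
rewrite ltr_distlC; apply/andP; split.
  rewrite ltNge; apply/negP => hle.
  have : `|(q t).[h] - q0.[h]| <= D t.
    by apply: bnd; rewrite ger0_norm //; have := ler_norm mu; rewrite /B; lra.
  have -> : (q t).[h] = 0 by apply/eqP; rewrite -/(root _ h) root_prod_XsubC.
  rewrite sub0r normrN horner_prodX => H.
  have : eps ^+ n <= `|\prod_(y <- r0) (h - y)|.
    apply: prod_lb; first exact: ltW.
    move=> y yin; have := head_min _ _ srt0 yin; rewrite -/mu => muy.
    by rewrite distrC ger0_norm; lra.
  move=> H2; have := le_lt_trans (le_trans H2 H) Dlt; by rewrite ltxx.
rewrite ltNge; apply/negP => hge.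
have : `|(q t).[mu] - q0.[mu]| <= D t by apply: bnd; rewrite /B; lra.
have -> : q0.[mu] = 0 by apply/eqP; rewrite -/(root _ mu) root_prod_XsubC head_in.
rewrite subr0 horner_prodX => H.
have : eps ^+ size (r t) <= `|\prod_(y <- r t) (mu - y)|.
  apply: prod_lb; first exact: ltW.
  move=> y yin; have := head_min _ _ (srt t) yin; rewrite -/h => hy.
  by rewrite distrC ger0_norm; lra.
rewrite sz => H2; have := le_lt_trans (le_trans H2 H) Dlt; by rewrite ltxx.
Qed.

End Roots.
Section Laplike.
Context {R : realType} {N : nat}.

Definition laplike (M : 'M[R]_N) :=
  [/\ M^T = M, M *m (const_mx 1 : 'cV[R]_N) = 0
    & forall v : 'rV[R]_N, 0 <= (v *m M *m v^T) 0 0].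

Lemma laplikeD A B : laplike A -> laplike B -> laplike (A + B).
Proof.
case=> [As Ar Ap] [Bs Br Bp]; split.
- by rewrite raddfD /= As Bs.
- by rewrite mulmxDl Ar Br addr0.
- by move=> v; rewrite mulmxDr mulmxDl mxE addr_ge0.
Qed.

Lemma laplikeZ c A : 0 <= c -> laplike A -> laplike (c *: A).
Proof.
move=> c0 [As Ar Ap]; split.
- by rewrite linearZ /= As.
- by rewrite -scalemxAl Ar scaler0.
- by move=> v; rewrite -scalemxAr -scalemxAl mxE mulr_ge0.
Qed.

Lemma laplike0 : laplike 0.
Proof.
split; first by rewrite trmx0.
  by rewrite mul0mx.
by move=> v; rewrite mulmx0 mul0mx mxE.
Qed.

Lemma laplike_sum (I : Type) (r : seq I) (P : pred I) (c : I -> R) (A : I -> 'M[R]_N) :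
  (forall i, P i -> 0 <= c i /\ laplike (A i)) ->
  laplike (\sum_(i <- r | P i) c i *: A i).
Proof.
move=> H; apply: (big_ind laplike) => //.
  exact: laplike0.
  exact: laplikeD.
by move=> i /H [c0 Ai]; apply: laplikeZ.
Qed.

Lemma sum_delta (i : 'I_N) (a : 'I_N -> R) :
  \sum_j (i == j)%:R * a j = a i.
Proof.
rewrite (bigD1 i) //= eqxx mul1r big1 ?addr0 // => j ji.
by rewrite eq_sym (negbTE ji) mul0r.
Qed.

Lemma lap_form (w : 'I_N -> 'I_N -> R) :
  (forall i j, w i j = w j i) -> (forall i j, 0 <= w i j) ->
  laplike (\matrix_(i, j) ((i == j)%:R * \sum_k w i k - w i j)).
Proof.
move=> ws wp; split.
- apply/matrixP => i j; rewrite !mxE eq_sym ws.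
  by case: eqP => [->|] //; rewrite !mul0r.
- apply/matrixP => i j; rewrite !mxE.
  under eq_bigr do rewrite !mxE mulr1.
  by rewrite sumrB sum_delta subrr.
move=> v; pose x : 'I_N -> R := fun i => v 0 i.
set M := \matrix_(i, j) _.
have E1 : (v *m M *m v^T) 0 0 = \sum_i \sum_j x i * M i j * x j.
  rewrite mxE exchange_big /=; apply: eq_bigr => j _.
  by rewrite !mxE big_distrl.
have E2 : \sum_i \sum_j x i * M i j * x j =
    \sum_i \sum_j w i j * (x i ^+ 2 - x i * x j).
  apply: eq_bigr => i _.
  have -> : \sum_j x i * M i j * x j =
      \sum_j ((i == j)%:R * (x i * (\sum_k w i k) * x j) - x i * w i j * x j).
    by apply: eq_bigr => j _; rewrite mxE; ring.
  rewrite sumrB sum_delta mulr_sumr big_distrl -sumrB /=.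
  by apply: eq_bigr => j _; ring.
have E3 : \sum_i \sum_j w i j * (x i ^+ 2 - x i * x j) =
    \sum_i \sum_j w i j * (x j ^+ 2 - x j * x i).
  rewrite exchange_big /=; apply: eq_bigr => i _; apply: eq_bigr => j _.
  by rewrite ws.
have HS : 0 <= \sum_i \sum_j w i j * (x i ^+ 2 - x i * x j) +
               \sum_i \sum_j w i j * (x j ^+ 2 - x j * x i).
  rewrite -big_split /=; apply: sumr_ge0 => i _.
  rewrite -big_split /=; apply: sumr_ge0 => j _.
  have -> : w i j * (x i ^+ 2 - x i * x j) + w i j * (x j ^+ 2 - x j * x i) =
    w i j * (x i - x j) ^+ 2 by ring.
  by rewrite mulr_ge0 // sqr_ge0.
rewrite -E3 -mulr2n -mulr_natl pmulr_rge0 // in HS.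
by rewrite E1 E2.
Qed.

End Laplike.
Section Eigs.
Context {R : realType} {N : nat}.

Lemma eigsP (M : 'M[R]_N) : M^T = M ->
  sorted <=%R (eigs M) /\ char_poly M = \prod_(x <- eigs M) ('X - x%:P).
Proof.
move=> Ms; rewrite /eigs.
exact: (epsilon_spec (inhabits [::]) _ (@sym_split _ _ _ Ms)).
Qed.

Lemma laplike_eig_ge0 (M : 'M[R]_N) x : laplike M -> x \in eigs M -> 0 <= x.
Proof.
case=> Ms Mr Mp xin.
have [_ cM] := eigsP _ Ms.
have : eigenvalue M x by rewrite eigenvalue_root_char cM root_prod_XsubC.
case/eigenvalueP => v vM v0.
have Q := Mp v; rewrite vM -scalemxAl mxE in Q.
have [i vi] : exists i, v 0 i != 0.
  apply/existsP; rewrite -negb_forall; apply: contra v0 => /forallP H.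
  by apply/eqP/rowP => i; rewrite mxE; apply/eqP/H.
have pos : 0 < (v *m v^T) 0 0.
  rewrite mxE (bigD1 i) //= mxE.
  have h1 : 0 < v 0 i * v 0 i by rewrite -expr2 lt0r sqr_ge0 sqrf_eq0 vi.
  have h2 : 0 <= \sum_(j | j != i) v 0 j * v^T j 0.
    by apply: sumr_ge0 => j _; rewrite mxE -expr2 sqr_ge0.
  lra.
by rewrite pmulr_lge0 in Q.
Qed.

Lemma laplike_eig0 (M : 'M[R]_N) : (0 < N)%N -> laplike M -> 0 \in eigs M.
Proof.
move=> N0 [Ms Mr Mp]; have [_ cM] := eigsP _ Ms.
rewrite -root_prod_XsubC -cM -eigenvalue_root_char.
apply/eigenvalueP; exists (const_mx 1 : 'rV_N).
  rewrite scale0r.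
  have -> : (const_mx 1 : 'rV[R]_N) = (const_mx 1 : 'cV[R]_N)^T by apply/matrixP => i j; rewrite !mxE.
  by rewrite -{1}Ms -trmx_mul Mr linear0.
apply/eqP => /rowP /(_ (Ordinal N0)); rewrite !mxE => /eqP.
by rewrite oner_eq0.
Qed.

Lemma laplike_eigs (M : 'M[R]_N) : (0 < N)%N -> laplike M ->
  exists r, [/\ eigs M = 0 :: r, sorted <=%R r, all (fun x => 0 <= x) r,
     size r = N.-1 & char_poly M = 'X * \prod_(x <- r) ('X - x%:P)].
Proof.
move=> N0 LM; have [Ms _ _] := LM.
have [srt cM] := eigsP _ Ms.
have z := laplike_eig0 _ N0 LM.
have nn y : y \in eigs M -> 0 <= y by apply: laplike_eig_ge0.
move: srt cM z nn; case: (eigs M) => [|a r] //= srt cM z nn.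
have a0 : a = 0.
  apply/eqP; rewrite eq_le; apply/andP; split.
    exact: (head_min (a :: r) 0 srt z).
  by apply: nn; rewrite mem_head.
subst a; exists r; split => //.
- exact: path_sorted srt.
- by apply/allP => y yr; apply: nn; rewrite inE yr orbT.
- by have := size_char_poly M; rewrite cM size_prod_XsubC /= => -[<-].
- by rewrite cM big_cons subr0.
Qed.

End Eigs.
Section Eig2.
Context {R : realType} {N : nat}.

Lemma eig2_cvg {T : Type} {F : set_system T} {PF : ProperFilter F}
  (M : T -> 'M[R]_N) (M0 : 'M[R]_N) :
  (1 < N)%N -> (forall t, laplike (M t)) -> laplike M0 ->
  (forall i j, (fun t => M t i j) @ F --> M0 i j) ->
  (fun t => eigval (M t) 2) @ F --> eigval M0 2.
Proof.
move=> N1 LM LM0 HM.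
have N0 : (0 < N)%N by apply: ltnW.
pose r t := behead (eigs (M t)).
have Hr t : [/\ eigs (M t) = 0 :: r t, sorted <=%R (r t),
    all (fun x => 0 <= x) (r t), size (r t) = N.-1 &
    char_poly (M t) = 'X * \prod_(x <- r t) ('X - x%:P)].
  by have [s [E1 E2 E3 E4 E5]] := laplike_eigs _ N0 (LM t); rewrite /r E1.
have [r0 [E01 E02 E03 E04 E05]] := laplike_eigs _ N0 LM0.
have -> : (fun t => eigval (M t) 2) = (fun t => head 0 (r t)).
  by apply/funext => t; have [E1 _ _ _ _] := Hr t; rewrite /eigval E1 /= nth0.
rewrite /eigval E01 /= nth0.
apply: root_head_cvg.
- by rewrite E04; case: (N) N1 => [|[|n]].
- by move=> t; have [_ _ _ -> _] := Hr t.
- by move=> t; have [_ ? _ _ _] := Hr t.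
- by move=> t; have [_ _ ? _ _] := Hr t.
- exact: E02.
move=> k; have H := @pcvg_char_poly _ F _ _ _ M M0 HM k.+1.
have -> : (fun t => (\prod_(x <- r t) ('X - x%:P))`_k) =
    (fun t => (char_poly (M t))`_k.+1).
  by apply/funext => t; have [_ _ _ _ ->] := Hr t; rewrite coefXM.
rewrite E05 coefXM in H; exact: (H _).
Qed.

End Eig2.
Section GraphFacts.
Variable N : nat.
Variable e : rel 'I_N.

Lemma ballP k i j : reflect
  (exists p : seq 'I_N, [/\ (size p <= k)%N, path e i p & last i p = j])
  (j \in Defs.ball e k i).
Proof.
elim: k j => [|k IH] j /=.
  rewrite inE; apply: (iffP eqP) => [->|[p [sp _ lp]]].
    by exists [::].
  by move: sp lp; case: p.
rewrite !inE; apply: (iffP orP).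
  case=> [/IH [p [sp pp lp]]|/existsP [z /andP [/IH [p [sp pp lp]] ezj]]].
    by exists p; split => //; apply: leqW.
  exists (rcons p j); split.
  - by rewrite size_rcons.
  - by rewrite rcons_path pp lp.
  - by rewrite last_rcons.
case=> p [sp pp lp].
have [sk|sk] := leqP (size p) k.
  by left; apply/IH; exists p.
right; move: sp pp lp sk; case/lastP: p => [|p y] //.
rewrite size_rcons rcons_path last_rcons ltnS => sp /andP [pp ey] <- _.
apply/existsP; exists (last i p); rewrite ey andbT.
by apply/IH; exists p.
Qed.

Hypothesis esym : symmetric e.

Lemma last_rev_belast (x : 'I_N) p : last (last x p) (rev (belast x p)) = x.
Proof. by case: p => //= a p; rewrite rev_cons last_rcons. Qed.

Lemma ball_sym k i j : (j \in Defs.ball e k i) = (i \in Defs.ball e k j).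
Proof.
suff H : forall i j, j \in Defs.ball e k i -> i \in Defs.ball e k j.
  by apply/idP/idP; apply: H.
move=> {}i {}j /ballP [p [sp pp lp]]; apply/ballP.
exists (rev (belast i p)); split.
- by rewrite size_rev size_belast.
- rewrite -lp rev_path.
  have -> : path (fun z => e^~ z) i p = path e i p.
    by apply: eq_path => x y /=; apply: esym.
  exact: pp.
- by rewrite -lp last_rev_belast.
Qed.

Lemma gdist_sym i j : gdist e i j = gdist e j i.
Proof. by rewrite /gdist; apply: eq_find => k; rewrite ball_sym. Qed.

End GraphFacts.

Section GraphFacts2.
Variable N : nat.
Variable e : rel 'I_N.

Lemma iotaN (i : 'I_N) : iota 0 N = 0%N :: iota 1 N.-1.
Proof. by case: N i => [[]|n] //. Qed.

Lemma gdist_ii i : gdist e i i = 0%N.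
Proof. by rewrite /gdist (iotaN i) /= inE eqxx. Qed.

Lemma gdist_neq i j : i != j -> gdist e i j != 0%N.
Proof.
move=> ij; have ji : (j == i) = false by rewrite eq_sym; apply/negbTE.
by rewrite /gdist (iotaN i) /= inE ji.
Qed.

Lemma gdist_le_dmax i j : (gdist e i j <= dmax e)%N.
Proof.
rewrite /dmax; apply: leq_trans (leq_bigmax i).
exact: (leq_bigmax_cond (P := xpredT) (F := fun j => gdist e i j)).
Qed.

End GraphFacts2.
Section Scalar.
Context {R : realType}.

Lemma expR_lim_pinfty (a : R) : 0 < a ->
  expR ((- t) * a) @[t --> +oo] --> (0 : R).
Proof.
move=> a0.
have h1 : (t * a) @[t --> +oo] --> +oo.
  by apply: gt0_cvgMly => //; exact: cvg_id.
have := cvg_comp _ _ h1 (@cvgr_expR R).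
by apply: cvg_trans; apply: near_eq_cvg; near=> t => /=; rewrite mulNr.
Unshelve. all: end_near.
Qed.

Lemma expR_lim_0 (a : R) : expR ((- t) * a) @[t --> 0^'+] --> (1 : R).
Proof.
have h : (- t) * a @[t --> (0:R)] --> - 0 * a.
  by apply: cvgM; [apply: cvgN; exact: cvg_id | exact: cvg_cst].
rewrite oppr0 mul0r in h.
apply: cvg_at_right_filter.
have := continuous_cvg _ (@continuous_expR R 0) h.
by rewrite expR0 => H; apply: H.
Qed.

End Scalar.
Lemma cvg_bigsum_in {T : Type} {F : set_system T} {FF : Filter F} {R : realType}
  (I : eqType) (r : seq I) (f : I -> T -> R) (l : I -> R) :
  (forall i, i \in r -> f i @ F --> l i) ->
  (fun t => \sum_(i <- r) f i t) @ F --> \sum_(i <- r) l i.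
Proof.
elim: r => [|a r IH] H.
  have -> : (fun t => \sum_(i <- [::]) f i t) = (fun=> 0).
    by apply/funext => t; rewrite big_nil.
  by rewrite big_nil; exact: cvg_cst.
have -> : (fun t => \sum_(i <- a :: r) f i t) =
    (fun t => f a t + \sum_(i <- r) f i t).
  by apply/funext => t; rewrite big_cons.
rewrite big_cons; apply: cvgD; first by apply: H; rewrite mem_head.
by apply: IH => i ir; apply: H; rewrite inE ir orbT.
Qed.

Lemma card_sum {R : realType} n (P : pred 'I_n) :
  (#|[set k | P k]%SET|%:R : R) = \sum_k (P k)%:R.
Proof.
rewrite -sum1_card natr_sum big_mkcond /=.
by apply: eq_bigr => k _; rewrite inE; case: (P k).
Qed.

Lemma sum_ind {R : realType} (x a b : nat) :
  \sum_(a <= d < b) ((x == d)%:R : R) = (a <= x < b)%:R.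
Proof.
rewrite -mem_index_iota -count_uniq_mem ?iota_uniq // -sum1_count natr_sum.
rewrite [RHS]big_mkcond /=; apply: eq_bigr => d _.
by rewrite eq_sym; case: (d == x).
Qed.

Lemma sum_le_const {R : realType} (s : seq R) c :
  (forall x, x \in s -> x <= c) -> \sum_(x <- s) x <= c *+ size s.
Proof.
elim: s => [|a s IH] H; first by rewrite big_nil.
rewrite big_cons /= mulrS lerD //; first by apply: H; rewrite mem_head.
by apply: IH => x xs; apply: H; rewrite inE xs orbT.
Qed.

Lemma prod_coef_sum {R : realType} (a : R) (s : seq R) :
  (\prod_(x <- a :: s) ('X - x%:P))`_(size s) = - (a + \sum_(x <- s) x).
Proof.
elim: s a => [|b s IH] a.
  by rewrite big_cons big_nil mulr1 big_nil coefB coefX coefC /= sub0r addr0.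
rewrite big_cons mulrBl coefB coefXM coefCM /= IH.
have -> : (\prod_(x <- b :: s) ('X - x%:P))`_(size s).+1 = 1.
  have := monic_prod_XsubC (b :: s) xpredT id.
  rewrite monicE /lead_coef size_prod_XsubC /= => /eqP.
  by [].
by rewrite big_cons; ring.
Qed.

Section GraphMx.
Context {R : realType} {N : nat} (e : rel 'I_N).
Hypothesis esym : symmetric e.

Definition wd (d : nat) (i j : 'I_N) : R := (gdist e i j == d)%:R.

Lemma dLapE d : d != 0%N ->
  dLap R e d = \matrix_(i, j) ((i == j)%:R * \sum_k wd d i k - wd d i j).
Proof.
move=> d0; apply/matrixP => i j; rewrite !mxE card_sum.
case: eqP => [<-|_].
  by rewrite /wd gdist_ii eq_sym (negbTE d0) mul1r subr0.
by rewrite mul0r sub0r /wd; case: (_ == d); rewrite ?oppr0.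
Qed.

Lemma laplike_dLap d : d != 0%N -> laplike (dLap R e d).
Proof.
move=> d0; rewrite dLapE //; apply: lap_form => i j.
  by rewrite /wd gdist_sym.
by rewrite /wd ler0n.
Qed.

Lemma laplike_LMell (s : R) : laplike (LMell e s).
Proof.
rewrite /LMell big_seq; apply: laplike_sum => d.
rewrite mem_index_iota => /andP [d1 _]; split; first exact: powR_ge0.
by apply: laplike_dLap; rewrite -lt0n.
Qed.

Lemma laplike_LLapl (lam : R) : laplike (LLapl e lam).
Proof.
rewrite /LLapl; apply: laplikeD; first exact: laplike_dLap.
rewrite big_seq; apply: laplike_sum => d.
rewrite mem_index_iota => /andP [d1 _]; split; first exact: expR_ge0.
by apply: laplike_dLap; rewrite -lt0n ltnW.
Qed.

Definition Kmx : 'M[R]_N := \sum_(1 <= d < (dmax e).+1) 1 *: dLap R e d.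

Lemma laplike_K : laplike Kmx.
Proof.
rewrite /Kmx big_seq; apply: laplike_sum => d.
rewrite mem_index_iota => /andP [d1 _]; split => //.
by apply: laplike_dLap; rewrite -lt0n.
Qed.

Lemma K_entry i j : Kmx i j = (i == j)%:R * (N.-1)%:R - (i != j)%:R.
Proof.
rewrite /Kmx summxE.
have -> : \sum_(1 <= d < (dmax e).+1) (1 *: dLap R e d) i j =
   \sum_(1 <= d < (dmax e).+1) ((i == j)%:R * \sum_k wd d i k - wd d i j).
  rewrite big_seq_cond [RHS]big_seq_cond; apply: eq_bigr => d.
  rewrite mem_index_iota andbT => /andP [d1 _].
  by rewrite scale1r dLapE ?mxE // -lt0n.
rewrite sumrB -mulr_sumr exchange_big /=.
have E k : \sum_(1 <= d < (dmax e).+1) wd d i k = (k != i)%:R.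
  rewrite /wd sum_ind ltnS gdist_le_dmax andbT lt0n.
  case: (eqVneq k i) => [->|ki]; first by rewrite gdist_ii.
  by rewrite gdist_neq // eq_sym.
under eq_bigr do rewrite E.
rewrite E eq_sym.
congr (_ * _ - _).
rewrite -card_sum.
have -> : [set k | k != i]%SET = [set~ i]%SET by apply/setP => k; rewrite !inE.
by rewrite cardsC1 card_ord.
Qed.

End GraphMx.
Section KEig.
Context {R : realType} {N : nat} (e : rel 'I_N).
Hypothesis esym : symmetric e.

Lemma K_eig (x : R) : (0 < N)%N -> x \in eigs (Kmx e) -> x = 0 \/ x = N%:R.
Proof.
move=> N0 xin.
have [Ms _ _] := laplike_K (R:=R) e esym.
have [_ cM] := eigsP _ Ms.
have : eigenvalue (Kmx e) x by rewrite eigenvalue_root_char cM root_prod_XsubC.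
case/eigenvalueP => v vM v0.
have [j0 vj0] : exists i, v 0 i != 0.
  apply/existsP; rewrite -negb_forall; apply: contra v0 => /forallP H.
  by apply/eqP/rowP => i; rewrite mxE; apply/eqP/H.
set S := \sum_i v 0 i.
have NE : (N%:R : R) = (N.-1)%:R + 1 by rewrite natr1 prednK.
have Hj j : x * v 0 j = N%:R * v 0 j - S.
  have := congr1 (fun A : 'M[R]_(1,N) => A 0 j) vM; rewrite /= !mxE => <-.
  have -> : \sum_i v 0 i * Kmx e i j =
      \sum_i ((j == i)%:R * (v 0 i * N%:R) - v 0 i).
    apply: eq_bigr => i _; rewrite K_entry // eq_sym NE.
    by case: (j == i) => /=; ring.
  by rewrite sumrB sum_delta mulrC.
have HS : x * S = 0.
  have : \sum_j x * v 0 j = \sum_j (N%:R * v 0 j - S) by apply: eq_bigr => j _.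
  rewrite -mulr_sumr sumrB -mulr_sumr sumr_const card_ord -/S => ->.
  by rewrite -mulr_natl; ring.
move/eqP: HS; rewrite mulf_eq0 => /orP [/eqP->|/eqP S0]; first by left.
right; have := Hj j0; rewrite S0 subr0 => /mulIf; apply; exact: vj0.
Qed.

Lemma K_eigval2 : (1 < N)%N -> eigval (Kmx (R:=R) e) 2 = N%:R.
Proof.
move=> N1; have N0 : (0 < N)%N by apply: ltnW.
have xle (x : R) : x \in eigs (Kmx e) -> x <= N%:R.
  by move=> /(K_eig _ N0) [->|->] //; rewrite ler0n.
have [r [E1 E2 E3 E4 E5]] := laplike_eigs _ N0 (laplike_K (R:=R) e esym).
rewrite /eigval E1 /= nth0.
have := char_poly_trace (Kmx (R:=R) e) N0; rewrite E5 coefXM.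
move: E1 E4 {E2 E3 E5}; case: r => [|h r'] E1 /=.
  move=> sz; have : (N.-1 == 0)%N by rewrite -sz.
  by rewrite -subn1 subn_eq0 leqNgt N1.
have N10 : (N.-1 == 0)%N = false by rewrite -subn1 subn_eq0 leqNgt N1.
move=> sz; rewrite N10 -sz /= prod_coef_sum => Htr.
move: sz => /= [sz].
have tr : \tr (Kmx (R:=R) e) = (N.-1)%:R *+ N.
  rewrite /mxtrace; under eq_bigr do rewrite K_entry // eqxx /= subr0 mul1r.
  by rewrite sumr_const card_ord.
rewrite tr in Htr; move/eqP: Htr; rewrite eqr_opp => /eqP Htr.
have hle : h <= N%:R by apply: xle; rewrite E1 !inE eqxx orbT.
have sle : \sum_(x <- r') x <= N%:R *+ size r'.
  by apply: sum_le_const => x xr; apply: xle; rewrite E1 !inE xr !orbT.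
have NE : N = (size r').+2 by rewrite sz prednK.
rewrite NE in Htr hle sle.
rewrite -(mulr_natr ((size r').+1%:R)) in Htr.
rewrite -(mulr_natr ((size r').+2%:R)) in sle.
rewrite NE; move: Htr hle sle; rewrite -!natr1 => Htr hle sle.
lra.
Qed.

End KEig.
Section Main.
Context {R : realType} {N : nat} (e : rel 'I_N).

Lemma LMell_entry (s : R) i j :
  LMell e s i j = \sum_(1 <= d < (dmax e).+1) ((d%:R : R) `^ (- s)) * dLap R e d i j.
Proof. by rewrite /LMell summxE; apply: eq_bigr => d _; rewrite mxE. Qed.

Lemma LLapl_entry (lam : R) i j :
  LLapl e lam i j = Lap R e i j +
    \sum_(2 <= d < (dmax e).+1) expR (- lam * d%:R) * dLap R e d i j.
Proof. by rewrite /LLapl mxE summxE; congr (_ + _); apply: eq_bigr => d _; rewrite mxE. Qed.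

Lemma powR_nat_exp (d : nat) (s : R) : (0 < d)%N ->
  (d%:R : R) `^ (- s) = expR ((- s) * ln d%:R).
Proof. by move=> d0; rewrite /powR pnatr_eq0 eqn0Ngt d0. Qed.

Hypothesis dm : (1 <= dmax e)%N.

Lemma K_entry_sum i j : Kmx (R:=R) e i j = \sum_(1 <= d < (dmax e).+1) dLap R e d i j.
Proof. by rewrite /Kmx summxE; apply: eq_bigr => d _; rewrite scale1r. Qed.

Lemma cvgA i j : LMell e s i j @[s --> +oo] --> Lap R e i j.
Proof.
under eq_fun do rewrite LMell_entry.
have -> : Lap R e i j =
    \sum_(1 <= d < (dmax e).+1) (d == 1)%:R * dLap R e d i j.
  rewrite big_ltn ?ltnS // eqxx mul1r big1_seq ?addr0 // => d /andP [_].
  by rewrite mem_index_iota => /andP [d2 _]; case: eqP d2 => [->|] //; rewrite mul0r.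
apply: cvg_bigsum_in => d; rewrite mem_index_iota => /andP [d1 _].
apply: cvgMr_tmp.
case: (eqVneq d 1) => [->|dn1].
  under eq_fun do rewrite powR1.
  exact: cvg_cst.
under eq_fun do rewrite powR_nat_exp //.
apply: expR_lim_pinfty; apply: ln_gt0; rewrite ltr1n.
by rewrite ltn_neqAle eq_sym dn1.
Qed.

Lemma cvgB0 i j : LMell e s i j @[s --> 0^'+] --> Kmx (R:=R) e i j.
Proof.
under eq_fun do rewrite LMell_entry.
rewrite K_entry_sum.
have -> : \sum_(1 <= d < (dmax e).+1) dLap R e d i j =
    \sum_(1 <= d < (dmax e).+1) 1 * dLap R e d i j.
  by apply: eq_bigr => d _; rewrite mul1r.
apply: cvg_bigsum_in => d; rewrite mem_index_iota => /andP [d1 _].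
apply: cvgMr_tmp.
under eq_fun do rewrite powR_nat_exp //.
exact: expR_lim_0.
Qed.

Lemma cvgC i j : LLapl e s i j @[s --> +oo] --> Lap R e i j.
Proof.
under eq_fun do rewrite LLapl_entry.
have H : Lap R e i j + \sum_(2 <= d < (dmax e).+1)
     expR (- s * d%:R) * dLap R e d i j @[s --> +oo] --> Lap R e i j + 0.
  apply: cvgD; first exact: cvg_cst.
  have E0 : \sum_(2 <= d < (dmax e).+1) 0 * dLap R e d i j = 0.
    by rewrite big1 // => d _; rewrite mul0r.
  have H2 : \sum_(2 <= d < (dmax e).+1) expR (- s * d%:R) * dLap R e d i j
      @[s --> +oo] --> \sum_(2 <= d < (dmax e).+1) 0 * dLap R e d i j.
    apply: cvg_bigsum_in => d; rewrite mem_index_iota => /andP [d2 _].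
    apply: cvgMr_tmp.
    by apply: expR_lim_pinfty; rewrite ltr0n; apply: leq_trans d2.
  by rewrite E0 in H2.
by rewrite addr0 in H.
Qed.

Lemma cvgD0 i j : LLapl e s i j @[s --> 0^'+] --> Kmx (R:=R) e i j.
Proof.
under eq_fun do rewrite LLapl_entry.
rewrite K_entry_sum big_ltn ?ltnS //.
apply: cvgD; first exact: cvg_cst.
have -> : \sum_(2 <= d < (dmax e).+1) dLap R e d i j =
    \sum_(2 <= d < (dmax e).+1) 1 * dLap R e d i j.
  by apply: eq_bigr => d _; rewrite mul1r.
apply: cvg_bigsum_in => d _.
apply: cvgMr_tmp.
exact: expR_lim_0.
Qed.

End Main.
Theorem lemma2 (R : realType) (N : nat) (e : rel 'I_N) :
  (2 <= N)%N -> simple_graph e -> connected_graph e ->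
  [/\ eigval (LMell e s) 2 / N%:R @[s --> +oo] --> eigval (Lap R e) 2 / N%:R,
      eigval (LMell e s) 2 / N%:R @[s --> 0^'+] --> (1 : R),
      eigval (LLapl e lam) 2 / N%:R @[lam --> +oo] --> eigval (Lap R e) 2 / N%:R
    & eigval (LLapl e lam) 2 / N%:R @[lam --> 0^'+] --> (1 : R)].
Proof.
move=> N2 [esym _] _.
have N0 : (0 < N)%N by apply: ltnW.
have dm : (1 <= dmax e)%N.
  have i0 : (0 < N)%N := N0.
  pose a := Ordinal N0; pose b := Ordinal N2.
  have ab : a != b by [].
  have h1 := gdist_le_dmax N e a b.
  have h2 := gdist_neq N e a b ab; rewrite -lt0n in h2.
  exact: leq_trans h2 h1.
have NN : (N%:R : R) != 0 by rewrite pnatr_eq0 -lt0n.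
have LL : laplike (Lap R e) := laplike_dLap (R:=R) e esym 1 isT.
have LK := laplike_K (R:=R) e esym.
have K2 := K_eigval2 (R:=R) e esym N2.
split.
- apply: cvgMr_tmp; apply: eig2_cvg => //.
  + by move=> t; apply: laplike_LMell.
  + by move=> i j; apply: cvgA.
- have H : eigval (LMell e s) 2 / N%:R @[s --> 0^'+] --> N%:R / (N%:R : R).
    apply: cvgMr_tmp; rewrite -K2.
    apply: eig2_cvg => //.
    + by move=> t; apply: laplike_LMell.
    + by move=> i j; apply: cvgB0.
  by rewrite divff in H.
- apply: cvgMr_tmp; apply: eig2_cvg => //.
  + by move=> t; apply: laplike_LLapl.
  + by move=> i j; apply: cvgC.
- have H : eigval (LLapl e s) 2 / N%:R @[s --> 0^'+] --> N%:R / (N%:R : R).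
    apply: cvgMr_tmp; rewrite -K2.
    apply: eig2_cvg => //.
    + by move=> t; apply: laplike_LLapl.
    + by move=> i j; apply: cvgD0.
  by rewrite divff in H.
Qed.
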